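(* Let $U=\{\xi_1,\dots,\xi_p\}\subset\mathbb{R}^k$ be finite, and for $j\in\Lambda=\{1,\dots,m\}$ let $f_j:\mathbb{R}^n\times U\to\mathbb{R}$ be such that $x\mapsto f_j(x,\xi_i)$ is continuously differentiable and convex for each $i\in\bar\Lambda=\{1,\dots,p\}$. Let $\{x^k\}$ be the sequence of iterates generated by Algorithm 1 (described in the context). If $\tilde x\in\mathbb{R}^n$ and $k$ is an index such that $f_j(\tilde x,\xi_i)\le f_j(x^k,\xi_i)$ for all $i\in\bar\Lambda$, $j\in\Lambda$, then $$\|\tilde x-x^{k+1}\|^2\le \|\tilde x-x^k\|^2+\|x^k-x^{k+1}\|^2 .$$
   Context: Let $\Phi_j(x)=\max_{i\in\bar\Lambda} f_j(x,\xi_i)$ and $\Phi=(\Phi_1,\dots,\Phi_m)$. For $x\in\mathbb{R}^n$, let $\vartheta_x(t)=\max_{j\in\Lambda}\max_{i\in\bar\Lambda}\{f_j(x,\xi_i)+\nabla f_j(x,\xi_i)^Tt-\Phi_j(x)\}$, let $t(x)$ be the unique minimizer over $t\in\mathbb{R}^n$ of $\vartheta_x(t)+\frac12\|t\|^2$, and $\Theta(x)=\vartheta_x(t(x))+\frac12\|t(x)\|^2$ its optimal value. Algorithm 1: choose $\epsilon>0$, $\beta\in(0,1)$, $x^0\in\mathbb{R}^n$, set $k=0$. Step 2: compute $t^k=t(x^k)$ and $\Theta(x^k)$. Step 3: if $|\Theta(x^k)|<\epsilon$, stop. Step 4: let $\alpha_k$ be the largest $\alpha\in\{1/2^r:r=1,2,3,\dots\}$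 such that for all $j\in\Lambda$, $\Phi_j(x^k+\alpha t^k)\le\Phi_j(x^k)+\alpha\beta\big(\max_{i\in\bar\Lambda}\{f_j(x^k,\xi_i)+\nabla f_j(x^k,\xi_i)^Tt^k\}-\Phi_j(x^k)\big)$. Step 5: set $x^{k+1}=x^k+\alpha_kt^k$, $k:=k+1$, go to Step 2. Gradients are with respect to $x$. *)

(* Defs.v *)
From HB Require Import structures.
From mathcomp Require Import all_boot all_order all_algebra.
From mathcomp Require Import all_classical all_reals all_analysis.
Set Implicit Arguments. Unset Strict Implicit. Unset Printing Implicit Defensive.
Import Order.TTheory GRing.Theory Num.Theory.
Import numFieldNormedType.Exports.
Local Open Scope ring_scope.

Section Alg1.
Variables (R : realType) (n m p : nat).
(* f j i x  stands for  f_j(x, xi_i); j ranges over Lambda = {1..m+1} (as 'I_m.+1),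
   i over bar Lambda = {1..p+1} (as 'I_p.+1). *)
Variable f : 'I_m.+1 -> 'I_p.+1 -> 'rV[R]_n -> R.
(* g j i x is the gradient of x |-> f j i x at x. *)
Variable g : 'I_m.+1 -> 'I_p.+1 -> 'rV[R]_n -> 'rV[R]_n.

Definition dotv (u v : 'rV[R]_n) : R := \sum_(l < n) u 0 l * v 0 l.
Definition sqnorm (u : 'rV[R]_n) : R := dotv u u.

Definition Phi (j : 'I_m.+1) (x : 'rV[R]_n) : R :=
  \big[Num.max/f j ord0 x]_(i < p.+1) f j i x.

Definition linz (j : 'I_m.+1) (i : 'I_p.+1) (x t : 'rV[R]_n) : R :=
  f j i x + dotv (g j i x) t.

Definition maxlin (j : 'I_m.+1) (x t : 'rV[R]_n) : R :=
  \big[Num.max/linz j ord0 x t]_(i < p.+1) linz j i x t.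

Definition vartheta (x t : 'rV[R]_n) : R :=
  \big[Num.max/(maxlin ord0 x t - Phi ord0 x)]_(j < m.+1)
    \big[Num.max/(linz j ord0 x t - Phi j x)]_(i < p.+1) (linz j i x t - Phi j x).

Definition subobj (x t : 'rV[R]_n) : R := vartheta x t + 2^-1 * sqnorm t.

Definition is_minimizer (x t : 'rV[R]_n) : Prop :=
  forall s : 'rV[R]_n, subobj x t <= subobj x s.

Variable tfun : 'rV[R]_n -> 'rV[R]_n.

Definition Theta (x : 'rV[R]_n) : R := subobj x (tfun x).

Definition armijo (beta : R) (x t : 'rV[R]_n) (a : R) : Prop :=
  forall j : 'I_m.+1,
    Phi j (x + a *: t) <= Phi j x + a * beta * (maxlin j x t - Phi j x).

(* Step k of Algorithm 1 is executed (no stop at Step 3), with step size alpha k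
   the largest element of {1/2^r : r >= 1} satisfying Armijo, and
   x (k+1) = x k + alpha k t^k, where t^k = t(x^k). *)
Definition alg1_step (eps beta : R) (x : nat -> 'rV[R]_n) (alpha : nat -> R)
    (k : nat) : Prop :=
  [/\ ~ (`|Theta (x k)| < eps),
      exists2 r : nat, (1 <= r)%N & alpha k = (2 ^+ r)^-1,
      armijo beta (x k) (tfun (x k)) (alpha k),
      (forall r : nat, (1 <= r)%N ->
          armijo beta (x k) (tfun (x k)) ((2 ^+ r)^-1) -> (2 ^+ r)^-1 <= alpha k)
    & x k.+1 = x k + alpha k *: tfun (x k)].

End Alg1.

Definition convex_fun (R : realType) (n : nat) (h : 'rV[R]_n -> R) : Prop :=
  forall (x y : 'rV[R]_n) (a : R), 0 <= a -> a <= 1 ->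
    h (a *: x + (1 - a) *: y) <= a * h x + (1 - a) * h y.

(* Main.v *)
Require Import Defs.
From HB Require Import structures.
From mathcomp Require Import all_boot all_order all_algebra.
From mathcomp Require Import all_classical all_reals all_analysis.
From mathcomp Require Import ring lra.
Import Order.TTheory GRing.Theory Num.Theory.
Import numFieldNormedType.Exports.
Local Open Scope ring_scope.
Section Helpers.
Variables (R : realType) (n : nat).
Implicit Types (u v w : 'rV[R]_n) (a : R).

Lemma dotvC u v : dotv u v = dotv v u.
Proof. by rewrite /dotv; apply: eq_bigr => l _; rewrite mulrC. Qed.

Lemma sqnorm_ge0 u : 0 <= sqnorm u.
Proof. by rewrite /sqnorm /dotv; apply: sumr_ge0 => l _; rewrite -expr2 sqr_ge0. Qed.

Lemma dotvDZr u v w a : dotv u (v + a *: w) = dotv u v + a * dotv u w.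
Proof.
rewrite /dotv mulr_sumr -big_split; apply: eq_bigr => l _ /=.
rewrite !mxE; ring.
Qed.

Lemma sqnormDZ u v a : sqnorm (u + a *: v) = sqnorm u + 2 * a * dotv u v + a ^+ 2 * sqnorm v.
Proof.
rewrite /sqnorm /dotv !mulr_sumr -!big_split; apply: eq_bigr => l _ /=.
rewrite !mxE; ring.
Qed.

Lemma sqnormZ v a : sqnorm (a *: v) = a ^+ 2 * sqnorm v.
Proof.
rewrite /sqnorm /dotv !mulr_sumr; apply: eq_bigr => l _ /=.
rewrite !mxE; ring.
Qed.

Lemma max_mono (a b c d : R) : a <= c -> b <= d -> Num.max a b <= Num.max c d.
Proof. by move=> h1 h2; rewrite ge_max !le_max h1 h2 orbT. Qed.

Local Open Scope classical_set_scope.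
Lemma grad_ineq (h : 'rV[R]_n -> R) x d :
  differentiable h x -> convex_fun h -> 'd h x d <= h (x + d) - h x.
Proof.
move=> dh hc.
rewrite -deriveE //.
have dv := @diff_derivable _ _ _ h x d dh.
have H : (fun a : R => a^-1 *: ((h \o shift x) (a *: d) - h x)) @ 0^'+ --> 'D_d h x.
  move=> A /dv /nbhs_ballP [_ /posnumP[e] xe_A].
  by exists e%:num => //= y xe_y /gt_eqF/negbT/xe_A; exact.
apply: (cvgr_to_le H).
exists 1 => //= a; rewrite /ball /= sub0r normrN => ha apos.
have a1 : a <= 1 by move: ha; rewrite gtr0_norm // => /ltW.
have := hc (x + d) x a (ltW apos) a1.
have -> : a *: (x + d) + (1 - a) *: x = a *: d + x.
  by rewrite scalerDr scalerBl scale1r; rewrite addrC addrA subrK addrC.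
move=> hh.
rewrite /= -[_ *: _]/(_ * _).
rewrite ler_pdivrMl //.
rewrite [X in X <= _]/=.
suff: h (a *: d + x) <= a * (h (x + d) - h x) + h x by rewrite lerBlDr.
by apply: (le_trans hh); rewrite le_eqVlt; apply/orP; left; apply/eqP; ring.
Qed.

End Helpers.
Theorem lemma4p3 (R : realType) (n m p : nat)
  (f : 'I_m.+1 -> 'I_p.+1 -> 'rV[R]_n -> R)
  (g : 'I_m.+1 -> 'I_p.+1 -> 'rV[R]_n -> 'rV[R]_n)
  (* each x |-> f_j(x, xi_i) is continuously differentiable with gradient g j i *)
  (hdiff : forall j i (x : 'rV[R]_n), differentiable (f j i) x /\
      ('d (f j i) x : 'rV[R]_n -> R) = (fun t => dotv (g j i x) t))
  (hcont : forall j i, continuous (g j i))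
  (* and convex *)
  (hconv : forall j i, convex_fun (f j i))
  (* t(x) is the (unique) minimizer of vartheta_x(t) + 1/2 ||t||^2 *)
  (tfun : 'rV[R]_n -> 'rV[R]_n)
  (htmin : forall x, is_minimizer f g x (tfun x))
  (* parameters of Algorithm 1 *)
  (eps beta : R) (heps : 0 < eps) (hbeta0 : 0 < beta) (hbeta1 : beta < 1)
  (* iterates x^0, x^1, ... and step sizes generated by Algorithm 1 *)
  (x : nat -> 'rV[R]_n) (alpha : nat -> R) (k : nat)
  (hsteps : forall l : nat, (l <= k)%N -> alg1_step f g tfun eps beta x alpha l)
  (xt : 'rV[R]_n)
  (hle : forall (j : 'I_m.+1) (i : 'I_p.+1), f j i xt <= f j i (x k)) :
  sqnorm (xt - x k.+1) <= sqnorm (xt - x k) + sqnorm (x k - x k.+1).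
Proof.
have [_ [r r1 ha] _ _ hx] := hsteps k (leqnn k).
set t := tfun (x k).
set d := xt - x k.
have apos : 0 < alpha k by rewrite ha invr_gt0 exprn_gt0.
have lz : forall e, 0 <= e -> forall j i,
    linz f g j i (x k) (t + e *: d) <= linz f g j i (x k) t.
  move=> e e0 j i; rewrite /linz dotvDZr addrA gerDl.
  have [hd hD] := hdiff j i (x k).
  have := @grad_ineq R n (f j i) (x k) d hd (hconv j i).
  rewrite hD /= /d (addrC (x k)) subrK => hg.
  have hgd : dotv (g j i (x k)) d <= 0.
    by apply: (le_trans hg); rewrite subr_le0.
  by rewrite mulr_ge0_le0.
have mono : forall e, 0 <= e -> vartheta f g (x k) (t + e *: d) <= vartheta f g (x k) t.
  move=> e e0; rewrite /vartheta.
  apply: (big_ind2 (fun a b : R => a <= b)).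
  - rewrite lerD2r /maxlin; apply: (big_ind2 (fun a b : R => a <= b)); first exact: lz.
      by move=> *; exact: max_mono.
    by move=> i _; exact: lz.
  - by move=> *; exact: max_mono.
  move=> j _; apply: (big_ind2 (fun a b : R => a <= b)).
  - by rewrite lerD2r; exact: lz.
  - by move=> *; exact: max_mono.
  by move=> i _; rewrite lerD2r; exact: lz.
have ineq : forall e, 0 < e -> 0 <= 2 * dotv t d + e * sqnorm d.
  move=> e e0.
  have := htmin (x k) (t + e *: d); rewrite /subobj sqnormDZ -/t.
  have := mono e (ltW e0).
  move=> h1 h2.
  have : 0 <= e * (2 * dotv t d + e * sqnorm d) by nra.
  by rewrite pmulr_rge0.
have key : 0 <= dotv t d.
  have := @sqnorm_ge0 R n d; rewrite le_eqVlt => /orP [/eqP S0|S0].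
    by have := ineq 1 ltr01; rewrite -S0; lra.
  case: (ltrP (dotv t d) 0) => // c0.
  have := ineq (- dotv t d / sqnorm d).
  rewrite mulfVK ?gt_eqF //.
  have -> : 0 < - dotv t d / sqnorm d.
    by rewrite divr_gt0 // oppr_gt0.
  move=> /(_ isT); lra.
rewrite hx.
have -> : xt - (x k + alpha k *: t) = d + (- alpha k) *: t.
  by rewrite /d scaleNr opprD addrA.
have -> : x k - (x k + alpha k *: t) = (- alpha k) *: t.
  by rewrite scaleNr opprD addrA subrr add0r.
rewrite sqnormDZ sqnormZ (@dotvC R n d t).
nra.
Qed.
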